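(* Let $q\in X^*\setminus\{e\}$ and let $\lambda_q$ be the largest positive real root of the polynomial $\mathfrak{p}_q(t):=t^{|q|}-\sum_{v\in\sqrt[*]{P_q}}t^{|q|-|v|}$. Then there are constants $c_{q,1},c_{q,2}>0$ such that for all $n\in\mathbb{N}$, $$c_{q,1}\lambda_q^n\le|\mathrm{infix}(Q_q)\cap X^n|\le c_{q,2}\lambda_q^n.$$
   Context: $X$ is a finite alphabet with $|X|\ge2$; $X^*$ the finite words (empty word $e$), $X^n$ the words of length $n$. $w\sqsubseteq\eta$ means $w$ is a prefix of $\eta$, $w\sqsubset\eta$ a proper prefix. $\mathrm{infix}(B)$ is the set of all finite factors (subwords) of words in $B$. A finite word $\eta$ is quasiperiodic with quasiperiod $q$ if for every natural number $j<|\eta|$ there is a prefix $u_j\sqsubseteq\eta$ with $j-|q|<|u_j|\le j$ and $u_j\cdot q\sqsubseteq\eta$; $Q_q$ is the set of such words (including $e$). $P_q:=\{v: e\sqsubset v\sqsubseteq q\sqsubset v\cdot q\}$, and $\sqrt[*]{P_q}:=P_q\setminus(P_q^2\cdot P_q^* )$ is its star root (elements of $P_q$ not a concatenation of two or more elements of $P_q$). *)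

(* Defs.v *)
From HB Require Import structures.
From mathcomp Require Import all_boot all_order all_algebra.
From Stdlib Require Import ClassicalEpsilon.
Set Implicit Arguments. Unset Strict Implicit. Unset Printing Implicit Defensive.
Import Order.TTheory GRing.Theory Num.Theory.

Definition decP (P : Prop) : bool :=
  if excluded_middle_informative P then true else false.

Section Words.
Variable X : finType.

Definition pprefix (w eta : seq X) : bool := prefix w eta && (size w < size eta).

(* Q_q : eta is quasiperiodic with quasiperiod q (the empty word included):
   for every j < |eta| there is a prefix u ⊑ eta with j - |q| < |u| <= j
   and u·q ⊑ eta.  (j - |q| < |u| is written j < |u| + |q| to avoid
   truncated subtraction on nat.) *)
Definition Qq (q eta : seq X) : Prop :=
  forall j : nat, j < size eta ->
    exists u : seq X, [/\ prefix u eta, j < size u + size q, size u <= j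
                        & prefix (u ++ q) eta].

Definition Pq (q v : seq X) : Prop :=
  [/\ pprefix [::] v, prefix v q & pprefix q (v ++ q)].

Definition Pq2star (q v : seq X) : Prop :=
  exists vs : seq (seq X), 2 <= size vs /\ (forall x, x \in vs -> Pq q x)
                           /\ v = flatten vs.

Definition starroot (q v : seq X) : Prop := Pq q v /\ ~ Pq2star q v.

Definition infixQ (q w : seq X) : Prop := exists eta, Qq q eta /\ infix w eta.

Definition infix_count (q : seq X) (n : nat) : nat :=
  #|[set w : n.-tuple X | decP (infixQ q (tval w))]|.

End Words.

Local Open Scope ring_scope.

(* Every element of P_q is a prefix of q (v ⊑ q), so the sum over the star
   root is written as a sum over the prefixes  take k q, k <= |q|
   (distinct k give distinct prefixes). *)
Definition pq (R : nzRingType) (X : finType) (q : seq X) : {poly R} :=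
  'X^(size q) -
  \sum_(k < (size q).+1 | decP (starroot q (take k q))) 'X^(size q - k).

Definition largest_pos_root (R : realFieldType) (p : {poly R}) (lam : R) : Prop :=
  [/\ 0 < lam, root p lam & forall mu : R, 0 < mu -> root p mu -> mu <= lam].

(* Main.v *)
From Pilot Require Import Defs.
From HB Require Import structures.
From mathcomp Require Import all_boot all_order all_algebra.
From Stdlib Require Import ClassicalEpsilon Classical Lia.
Set Implicit Arguments. Unset Strict Implicit. Unset Printing Implicit Defensive.
Import Order.TTheory GRing.Theory Num.Theory.

Notation dP := Pilot.Defs.decP.
Lemma decPP (P : Prop) : reflect P (dP P).
Proof. rewrite /Pilot.Defs.decP; case: excluded_middle_informative => h; by constructor. Qed.

Definition Kl (X : finType) (q : seq X) : seq nat :=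
  [seq k <- iota 1 (size q) | dP (starroot q (take k q))].

Lemma mem_Kl (X : finType) (q : seq X) k : k \in Kl q ->
  [/\ 0 < k, k <= size q & starroot q (take k q)].
Proof.
rewrite mem_filter mem_iota => /andP[/decPP h /andP[h1 h2]].
by split=> //; rewrite -ltnS -(add1n (size q)).
Qed.

Lemma prefix_le (X : finType) (a b c : seq X) :
  prefix a c -> prefix b c -> size a <= size b -> prefix a b.
Proof.
move=> ha hb hs; move: ha hb; rewrite !prefixE => /eqP ha /eqP hb.
by rewrite -hb take_takel // ha.
Qed.

Lemma prefix_take_eq (X : finType) (a c : seq X) : prefix a c -> a = take (size a) c.
Proof. by rewrite prefixE => /eqP ->. Qed.

Lemma prefix_size (X : finType) (a c : seq X) : prefix a c -> size a <= size c.
Proof. by move=> /prefixP [s ->]; rewrite size_cat leq_addr. Qed.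

Inductive SS (X : finType) (q : seq X) : seq X -> Prop :=
| SS0 : SS q [::]
| SSc k u : k \in Kl q -> SS q u -> SS q (take k q ++ u).

Lemma Kl_prefix (X : finType) (q : seq X) k : k \in Kl q ->
  prefix q (take k q ++ q).
Proof. by case/mem_Kl => _ _ [[_ _ /andP[]]]. Qed.

Lemma SS_prefix (X : finType) (q : seq X) u : SS q u -> prefix q (u ++ q).
Proof.
elim=> [|k u0 hk _ IH]; first exact: prefix_refl.
have hp := Kl_prefix hk.
have [k0 kq _] := mem_Kl hk.
rewrite -{1}(cat_take_drop k q) -catA prefix_catr //.
rewrite eqxx /=.
apply: prefix_trans IH.
by move: hp; rewrite -{1}(cat_take_drop k q) prefix_catr // eqxx.
Qed.

Lemma SS_cat (X : finType) (q : seq X) a b : SS q a -> SS q b -> SS q (a ++ b).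
Proof. elim=> // k u0 hk _ IH hb; rewrite -catA; exact: SSc (IH hb). Qed.

Lemma SS_size (X : finType) (q : seq X) u : SS q u -> u != [::] ->
  exists k, k \in Kl q.
Proof. by case=> [//|k u' hk _ _]; exists k. Qed.

Ltac fix_sizes := repeat match goal with
 | H : context [@size ?T ?s] |- _ =>
    match goal with
    | H' : context [@size ?T' ?s'] |- _ =>
        assert_fails (constr_eq T T'); constr_eq s s';
        change (@size T' s') with (@size T s) in H'
    | |- context [@size ?T' ?s'] =>
        assert_fails (constr_eq T T'); constr_eq s s';
        change (@size T' s') with (@size T s)
    end
 end.

Ltac fix_nats := repeat match goal with
 | x : ?T |- _ => assert_fails (constr_eq T nat); change nat in x
 end.

Ltac nlia := intros; fix_sizes; fix_nats; repeat match goal with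
 | H : is_true (leq _ _) |- _ => move/ssrnat.leP: H => H
 | H : is_true (~~ leq _ _) |- _ => move/negP/ssrnat.leP: H => H
 | |- is_true (leq _ _) => apply/ssrnat.leP
 | |- is_true (_ && _) => apply/andP; split
 | H : is_true (_ && _) |- _ => let a := fresh "ha" in let b := fresh "hb" in move/andP: H => [a b]
 | H : context [addn] |- _ => rewrite -plusE in H
 | H : context [subn] |- _ => rewrite -minusE in H
 | H : context [muln] |- _ => rewrite -multE in H
 | |- context [addn] => rewrite -plusE
 | |- context [subn] => rewrite -minusE
 | |- context [muln] => rewrite -multE
 end; lia.

Lemma catsI (X : finType) (s a b : seq X) : s ++ a = s ++ b -> a = b.
Proof. by elim: s => //= x s IH [] /IH. Qed.

Lemma prefix_cat2 (X : finType) (s a b : seq X) : prefix (s ++ a) (s ++ b) = prefix a b.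
Proof. by rewrite prefix_catr // eqxx. Qed.

Lemma drop_catle (X : finType) p (u s : seq X) : p <= size u ->
  drop p (u ++ s) = drop p u ++ s.
Proof.
rewrite drop_cat; case: ltnP => h1 h2 //.
have -> : p = size u.
  nlia.
by rewrite subnn drop0 drop_size.
Qed.

Lemma prefix_occ (X : finType) (u q eta : seq X) :
  prefix (u ++ q) eta -> prefix q (drop (size u) eta).
Proof. by case/prefixP => s ->; rewrite -catA drop_size_cat // prefix_prefix. Qed.

Lemma flatten_lt (X : finType) (vs : seq (seq X)) x :
  (forall y, y \in vs -> 0 < size y) -> 1 < size vs -> x \in vs ->
  size x < size (flatten vs).
Proof.
move=> hpos h2 hx; move: hpos h2; case/splitPr: hx => s1 s2.
rewrite flatten_cat /= !size_cat.
case: s1 => [|y s1] /=.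
  case: s2 => [|y s2] //= hpos _.
  have hy : 0 < size y by apply: hpos; rewrite !inE eqxx orbT.
  rewrite size_cat; nlia.
move=> hpos _.
have hy : 0 < size y by apply: hpos; rewrite !inE eqxx.
rewrite size_cat; nlia.
Qed.

Lemma Pq_SS (X : finType) (q : seq X) n v : size v <= n -> Pq q v -> SS q v.
Proof.
elim: n v => [|n IH] v hn hP.
  by case: hP; rewrite /pprefix /= ltnNge hn andbF.
case: (classic (Pq2star q v)) => h.
  case: h => vs [h2 [hall hvv]]; subst v.
  have hs : forall x, x \in vs -> SS q x.
    move=> x hx; apply: IH (hall x hx).
    have hpos : forall y, y \in vs -> 0 < size y.
      by move=> y hy; case: (hall y hy) => /andP[_].
    have := flatten_lt hpos h2 hx; move=> H; rewrite -ltnS; exact: leq_trans H hn.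
  elim: vs {h2 hall hn hP} hs => [|x vs IHv] hs /=; first exact: SS0.
  apply: SS_cat; first by apply: hs; rewrite inE eqxx.
  by apply: IHv => y hy; apply: hs; rewrite inE hy orbT.
have hv := hP; case: hv => /andP[_ h0] hpre _.
rewrite -[v]cats0 (prefix_take_eq hpre).
apply: SSc; last exact: SS0.
rewrite mem_filter mem_iota -(prefix_take_eq hpre).
apply/andP; split; first by apply/decPP.
rewrite add1n ltnS h0 /=; exact: prefix_size hpre.
Qed.

Lemma SS_Qq (X : finType) (q : seq X) u : SS q u -> Qq q (u ++ q).
Proof.
move=> hS; elim: hS => [|k u0 hk hu IH].
  move=> j hj; exists [::]; split => //; [exact: prefix0s | exact: prefix_refl].
have [k0 kq _] := mem_Kl hk.
have hpre := SS_prefix (SSc hk hu).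
move=> j hj.
case: (ltnP j (size q)) => hjq.
  by exists [::]; split => //; exact: prefix0s.
have /IH [w [h1 h2 h3 h4]] : j - k < size (u0 ++ q).
  move: hj; rewrite !size_cat size_takel //; nlia.
exists (take k q ++ w); split.
- by rewrite -catA prefix_cat2.
- by rewrite size_cat size_takel //; nlia.
- by rewrite size_cat size_takel //; nlia.
- by rewrite -!catA prefix_cat2. 
Qed.

Lemma Qq_SS (X : finType) (q : seq X) N eta : q != [::] -> size eta <= N ->
  Qq q eta -> eta != [::] -> exists u, SS q u /\ eta = u ++ q.
Proof.
move=> hq; elim: N eta => [|N IH] eta hN hQ hne.
  by case: eta hne hN hQ.
have hq0 : 0 < size q by move: hq; rewrite lt0n size_eq0.
have he0 : 0 < size eta by move: hne; rewrite lt0n size_eq0.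
have hpq : prefix q eta.
  have [u [_ _ h3 h4]] := hQ 0 he0.
  by case: u h3 h4.
case: (leqP (size eta) (size q)) => hsz.
  exists [::]; split; first exact: SS0.
  have hs := prefix_size hpq.
  have heq : size q = size eta by nlia.
  by rewrite /= [RHS](prefix_take_eq hpq) heq take_size.
set P := fun p => (0 < p) && (p <= size q) && prefix q (drop p eta).
have exP : exists p, P p.
  have [u [_ h2 h3 h4]] := hQ (size q) hsz.
  exists (size u); rewrite /P h3 prefix_occ // !andbT; nlia.
have [p Pp pmin] := find_ex_minn exP.
case/andP: Pp => /andP[p0 pq] hocc.
set v := take p eta; set eta' := drop p eta.
have hv : v = take p q by rewrite /v (prefix_take_eq hpq) take_takel.
have szv : size v = p by rewrite hv size_takel.
have hveta : eta = v ++ eta' by rewrite cat_take_drop.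
have hPv : Pq q v.
  split.
  - by rewrite /pprefix prefix0s szv.
  - by rewrite hv prefix_take.
  - rewrite /pprefix size_cat szv; apply/andP; split; last by nlia.
    apply: (prefix_le hpq); last by rewrite size_cat; nlia.
    by rewrite [X in prefix _ X]hveta prefix_cat2.
have hQ' : Qq q eta'.
  move=> j hj.
  have hj' : p + j < size eta by move: hj; rewrite size_drop; nlia.
  have [u [h1 h2 h3 h4]] := hQ (p + j) hj'.
  case: (leqP p (size u)) => hpu.
    exists (drop p u); split.
    - by case/prefixP: h1 => s hs; rewrite /eta' hs drop_catle // prefix_prefix.
    - by rewrite size_drop; nlia.
    - by rewrite size_drop; nlia.
    - case/prefixP: h4 => s hs; rewrite /eta' hs -catA drop_catle //.
      by rewrite catA prefix_prefix.
  have hu0 : size u = 0.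
    case: (posnP (size u)) => // hu.
    have := pmin (size u); rewrite /P hu prefix_occ // andbT.
    move=> /(_ (leq_trans (ltnW hpu) pq)); nlia.
  exists [::]; split => //; [exact: prefix0s | nlia].
have hne' : eta' != [::].
  rewrite /eta' -size_eq0 -lt0n; exact: leq_trans hq0 (prefix_size hocc).
have [|u' [hu' he']] := IH eta' _ hQ' hne'.
  rewrite /eta' size_drop; nlia.
exists (v ++ u'); split.
  exact: SS_cat (Pq_SS (leqnn _) hPv) hu'.
by rewrite -catA -he'.
Qed.

Lemma code_lt (X : finType) (q : seq X) (k k' : nat) (u u' : seq X) :
  k \in Kl q -> k' \in Kl q -> SS q u -> SS q u' -> k < k' ->
  take k q ++ u = take k' q ++ u' -> False.
Proof.
move=> hk hk' hu hu' hlt heq.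
have [k0 kq [hPk _]] := mem_Kl hk.
have [k0' kq' [_ hns]] := mem_Kl hk'.
set v := take (k' - k) (drop k q).
have htk : take k' q = take k q ++ v.
  rewrite -{1}(cat_take_drop k (take k' q)) take_takel ?(ltnW hlt) //.
  by rewrite /v take_drop subnK // ltnW.
have huv : u = v ++ u' by apply: (@catsI _ (take k q)); rewrite heq htk catA.
have szv : size v = k' - k by rewrite /v size_takel // size_drop; nlia.
have p1 := SS_prefix hu; have p2 := SS_prefix hu'.
apply: hns; exists [:: take k q; v]; split => //; split; last by rewrite /= cats0.
move=> x; rewrite !inE => /orP[] /eqP ->//.
split.
- by rewrite /pprefix prefix0s szv /=; nlia.
- apply: (prefix_le _ p1); last by rewrite szv; nlia.
  by rewrite huv -catA prefix_prefix.
- rewrite /pprefix size_cat szv; apply/andP; split; last by nlia.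
  apply: (prefix_le p1); last by rewrite size_cat; nlia.
  by rewrite huv -catA prefix_cat2.
Qed.

Lemma code (X : finType) (q : seq X) (k k' : nat) (u u' : seq X) :
  k \in Kl q -> k' \in Kl q -> SS q u -> SS q u' ->
  take k q ++ u = take k' q ++ u' -> k = k' /\ u = u'.
Proof.
move=> hk hk' hu hu' heq.
case: (ltngtP k k') => h.
- by case: (code_lt hk hk' hu hu' h heq).
- by case: (code_lt hk' hk hu' hu h (esym heq)).
- by split => //; move: heq; rewrite h => /catsI.
Qed.

Fixpoint Wf (X : finType) (q : seq X) (f m : nat) : seq (seq X) :=
  match f with
  | 0 => if m == 0 then [:: [::]] else [::]
  | f'.+1 => if m == 0 then [:: [::]] else
      flatten [seq [seq take k q ++ u | u <- Wf q f' (m - k)] | k <- [seq k <- Kl q | k <= m]]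
  end.

Lemma Kl_pos (X : finType) (q : seq X) k : k \in Kl q -> 0 < k.
Proof. by case/mem_Kl. Qed.

Lemma Wf_S (X : finType) (q : seq X) f m : Wf q f.+1 m =
  if m == 0 then [:: [::]] else
  flatten [seq [seq take k q ++ u | u <- Wf q f (m - k)] | k <- [seq k <- Kl q | k <= m]].
Proof. by []. Qed.

Lemma Wf_step (X : finType) (q : seq X) f m : m <= f -> Wf q f.+1 m = Wf q f m.
Proof.
elim: f m => [|f IH] m hm.
  by move: hm; rewrite leqn0 => /eqP ->.
rewrite Wf_S [RHS]Wf_S; case: eqP => // hm0.
apply: (congr1 flatten); apply/eq_in_map => k; rewrite mem_filter => /andP[hkm hk].
rewrite IH //; have := Kl_pos hk; nlia.
Qed.

Lemma Wf_ge (X : finType) (q : seq X) f m : m <= f -> Wf q f m = Wf q m m.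
Proof.
elim: f => [|f IH] hm; first by move: hm; rewrite leqn0 => /eqP ->.
case: (ltngtP m f.+1) => h.
- by rewrite Wf_step // IH.
- by move: hm; rewrite leqNgt h.
- by rewrite h.
Qed.

Definition W (X : finType) (q : seq X) m := Wf q m m.

Lemma W_eq (X : finType) (q : seq X) m : W q m =
  if m == 0 then [:: [::]] else
  flatten [seq [seq take k q ++ u | u <- W q (m - k)] | k <- [seq k <- Kl q | k <= m]].
Proof.
case: m => [//|m]; rewrite /W Wf_S.
apply: (congr1 flatten); apply/eq_in_map => k; rewrite mem_filter => /andP[hkm hk].
rewrite (@Wf_ge _ _ m) //; have := Kl_pos hk; nlia.
Qed.

Lemma mem_W (X : finType) (q : seq X) m u : (u \in W q m) <-> (SS q u /\ size u = m).
Proof.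
split.
  elim/ltn_ind: m u => m IH u; rewrite W_eq; case: eqP => [-> | hm].
    by rewrite inE => /eqP ->; split => //; exact: SS0.
  case/flatten_mapP => k; rewrite mem_filter => /andP[hkm hk] /mapP [u' hu' ->].
  have hk0 := Kl_pos hk; have [_ kq _] := mem_Kl hk.
  have hmk : m - k < m by nlia.
  have [hS hs] := IH (m - k) hmk u' hu'.
  split; first exact: SSc.
  by rewrite size_cat size_takel // hs; nlia.
case=> hS; elim: hS m => [|k u0 hk hu IH] m.
  by move=> <-; rewrite W_eq.
have hk0 := Kl_pos hk; have [_ kq _] := mem_Kl hk.
rewrite size_cat size_takel // => hm.
rewrite W_eq (_ : (m == 0) = false); last by apply/eqP; nlia.
apply/flatten_mapP; exists k; first by rewrite mem_filter hk andbT; nlia.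
apply: map_f; apply: IH; nlia.
Qed.

Lemma uniq_flatten_map (S T : eqType) (B : S -> seq T) s : uniq s ->
  (forall x, x \in s -> uniq (B x)) ->
  (forall x y z, x \in s -> y \in s -> z \in B x -> z \in B y -> x = y) ->
  uniq (flatten (map B s)).
Proof.
elim: s => //= x s IH /andP[hx hs] hB hd.
rewrite cat_uniq hB ?mem_head //= IH //; last first.
- by move=> a b z ha hb; apply: hd; rewrite inE ?ha ?hb orbT.
- by move=> y hy; apply: hB; rewrite inE hy orbT.
rewrite andbT; apply/hasPn => z /flatten_mapP [y hy hz]; apply/negP => hzx.
have hxy : x = y by apply: (hd x y z) => //; rewrite inE ?eqxx ?hy ?orbT.
by move: hx; rewrite hxy hy.
Qed.

Lemma uniq_W (X : finType) (q : seq X) m : uniq (W q m).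
Proof.
elim/ltn_ind: m => m IH; rewrite W_eq; case: eqP => // hm.
apply: uniq_flatten_map.
- by apply: filter_uniq; apply: filter_uniq; apply: iota_uniq.
- move=> k; rewrite mem_filter => /andP[hkm hk].
  rewrite map_inj_uniq; first by apply: IH; have := Kl_pos hk; nlia.
  by move=> a b /catsI.
- move=> k k' z; rewrite mem_filter => /andP[_ hk]; rewrite mem_filter => /andP[_ hk'].
  move=> /mapP [u hu ->] /mapP [u' hu' heq].
  have [hS _] := (mem_W _ _ _).1 hu; have [hS' _] := (mem_W _ _ _).1 hu'.
  by case: (code hk hk' hS hS' heq).
Qed.

Lemma size_W (X : finType) (q : seq X) m : 0 < m ->
  size (W q m) = \sum_(k <- Kl q | k <= m) size (W q (m - k)).
Proof.
move=> hm; rewrite W_eq (_ : (m == 0) = false); last by case: m hm.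
rewrite size_flatten /shape -map_comp sumnE big_map big_filter.
by apply: eq_bigr => k _; rewrite /= size_map.
Qed.

Lemma take_catle (X : finType) n (s1 s2 : seq X) : n <= size s1 ->
  take n (s1 ++ s2) = take n s1.
Proof.
rewrite take_cat; case: ltnP => // h1 h2.
have -> : n = size s1 by nlia.
by rewrite subnn take0 cats0 take_size.
Qed.

Lemma take_catge (X : finType) n (s1 s2 : seq X) : size s1 <= n ->
  take n (s1 ++ s2) = s1 ++ take (n - size s1) s2.
Proof. by rewrite take_cat; case: ltnP => // h1 h2; exfalso; nlia. Qed.

Lemma SS_take (X : finType) (q : seq X) u l : 0 < size q -> SS q u -> l <= size u ->
  exists u3 e, [/\ SS q u3, e < size q & take l u = u3 ++ take e q].
Proof.
move=> hq hS; elim: hS l => [|k u0 hk hu IH] l.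
  rewrite leqn0 => /eqP ->; exists [::], 0; split; [exact: SS0 | exact: hq | by rewrite !take0].
have [k0 kq _] := mem_Kl hk.
rewrite size_cat size_takel // => hl.
case: (ltnP l k) => hlk.
  exists [::], l; split; [exact: SS0 | nlia |].
  by rewrite take_catle ?size_takel ?take_takel //; nlia.
have [u3 [e [h1 h2 h3]]] := IH (l - k) ltac:(nlia).
exists (take k q ++ u3), e; split => //; first exact: SSc.
by rewrite take_catge size_takel // h3 catA.
Qed.

Lemma SS_drop (X : finType) (q : seq X) u i : SS q u -> i <= size u ->
  exists d k u', [/\ d <= size q, k <= size q, SS q u' &
                  drop i u = drop d (take k q) ++ u'].
Proof.
move=> hS; elim: hS i => [|k u0 hk hu IH] i.
  rewrite leqn0 => /eqP ->; exists 0, 0, [::]; split => //; [exact: SS0 | by rewrite drop0 take0].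
have [k0 kq _] := mem_Kl hk.
rewrite size_cat size_takel // => hi.
case: (ltnP i k) => hik.
  exists i, k, u0; split => //; first by nlia.
  by rewrite drop_cat size_takel // hik.
have [d [k' [u' [h1 h2 h3 h4]]]] := IH (i - k) ltac:(nlia).
exists d, k', u'; split => //.
rewrite drop_cat size_takel //; case: ltnP => h; first by nlia.
exact: h4.
Qed.

Lemma SS_window (X : finType) (q : seq X) n x u' : 0 < size q ->
  size x <= size q -> SS q u' -> n <= size x + size u' + size q ->
  exists u3, [/\ SS q u3, n - 2 * size q <= size u3, size u3 <= n &
              take n (x ++ u' ++ q) = take n (x ++ u3 ++ q)].
Proof.
move=> hq hx hS hn.
case: (leqP (size x + size u') n) => h1.
  by exists u'; split => //; nlia.
case: (leqP n (size x)) => h2.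
  exists [::]; split; [exact: SS0 | nlia | by [] |].
  by rewrite take_catle // [RHS]take_catle.
have hl : n - size x <= size u' by nlia.
have [u3 [e [h3 h4 h5]]] := SS_take hq hS hl.
have hsz : n - size x = size u3 + e.
  by rewrite -(size_takel hl) h5 size_cat size_takel //; nlia.
exists u3; split => //; [nlia | nlia |].
rewrite [LHS]take_catge; last by nlia.
rewrite take_catle; last by nlia.
rewrite h5 [RHS]take_catge; last by nlia.
rewrite take_catge; last by nlia.
have -> : n - size x - size u3 = e by nlia.
by [].
Qed.

Definition Cl (X : finType) (q : seq X) n : seq (seq X) :=
  flatten [seq flatten [seq flatten
    [seq [seq take n (drop d (take k q) ++ u ++ q) | u <- W q l]
    | l <- index_iota (n - 2 * size q) n.+1]
    | k <- index_iota 0 (size q).+1]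
    | d <- index_iota 0 (size q).+1].

Lemma mem_Cl (X : finType) (q : seq X) n w : q != [::] -> size w = n -> infixQ q w ->
  w \in Cl q n.
Proof.
move=> hq hw [eta [hQ hinf]].
have hq0 : 0 < size q by move: hq; rewrite lt0n size_eq0.
suff [d [k [u3 [h1 h2 h3 [h4 h5] h6]]]] : exists d k u3, [/\ d <= size q, k <= size q,
    SS q u3, n - 2 * size q <= size u3 /\ size u3 <= n &
    w = take n (drop d (take k q) ++ u3 ++ q)].
  apply/flatten_mapP; exists d; first by rewrite mem_index_iota; nlia.
  apply/flatten_mapP; exists k; first by rewrite mem_index_iota; nlia.
  apply/flatten_mapP; exists (size u3); first by rewrite mem_index_iota; nlia.
  by rewrite h6; apply: map_f; apply/mem_W.
have [s [s' hs]] := infixP hinf.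
have hweq : w = take n (drop (size s) eta).
  by rewrite hs drop_size_cat // -hw take_catle // take_size.
have hsz : size s + n <= size eta by rewrite hs !size_cat hw; nlia.
case: (eqVneq eta [::]) => he.
  have hn0 : n = 0 by move: hsz; rewrite he /=; nlia.
  exists 0, 0, [::]; split => //; first exact: SS0.
    by rewrite hn0.
  by rewrite hn0 take0; apply/eqP; rewrite -size_eq0 hw hn0.
have [u [hu hequ]] := Qq_SS hq (leqnn _) hQ he.
have hsz' : size s + n <= size u + size q by rewrite hequ size_cat in hsz.
case: (leqP (size s) (size u)) => hsu.
  have [d [k [u' [h1 h2 h3 h4]]]] := SS_drop hu hsu.
  have hx : size (drop d (take k q)) <= size q by rewrite size_drop size_takel //; nlia.
  have hn : n <= size (drop d (take k q)) + size u' + size q.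
    have := congr1 size h4; rewrite size_drop size_cat => <-; nlia.
  have [u3 [g1 g2 g3 g4]] := SS_window hq0 hx h3 hn.
  exists d, k, u3; split => //.
  by rewrite hweq hequ drop_catle // h4 -catA g4.
exists (size s - size u), (size q), [::].
split; [nlia | by [] | exact: SS0 | by rewrite /=; split; nlia | ].
rewrite hweq hequ drop_cat ltnNge (ltnW hsu) /= take_size /= take_catle //.
rewrite size_drop; nlia.
Qed.

Lemma card_ge (X : finType) n (P : seq X -> Prop) (s : seq (seq X)) : uniq s ->
  (forall w, w \in s -> size w = n /\ P w) ->
  size s <= #|[set t : n.-tuple X | dP (P (tval t))]|.
Proof.
move=> hu hs; rewrite cardE -(size_map val).
apply: uniq_leq_size => // w hw.
have [hsw hP] := hs w hw.
have hw' : size w == n by rewrite hsw.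
apply/mapP; exists (Tuple hw') => //.
by rewrite mem_enum inE; apply/decPP.
Qed.

Lemma card_le (X : finType) n (P : seq X -> Prop) (s : seq (seq X)) :
  (forall w, size w = n -> P w -> w \in s) ->
  #|[set t : n.-tuple X | dP (P (tval t))]| <= size s.
Proof.
move=> hs; rewrite cardE -(size_map val).
apply: uniq_leq_size; first by rewrite map_inj_uniq ?enum_uniq //; exact: val_inj.
move=> w /mapP [t ht ->]; apply: hs; first exact: size_tuple.
by move: ht; rewrite mem_enum inE => /decPP.
Qed.

Lemma count_ge (X : finType) (q : seq X) m n : m <= n -> n <= m + size q ->
  size (W q m) <= infix_count q n.
Proof.
move=> h1 h2; rewrite /infix_count.
rewrite -(size_map (fun u => take n (u ++ q))).
apply: card_ge.
  rewrite map_inj_in_uniq ?uniq_W //.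
  move=> a b /mem_W [_ ha] /mem_W [_ hb] /(congr1 (take m)).
  by rewrite !take_takel // (@take_size_cat _ m a q ha) (@take_size_cat _ m b q hb).
move=> w /mapP [u /mem_W [hu hsu] ->]; split.
  by rewrite size_takel // size_cat; nlia.
exists (u ++ q); split; first exact: SS_Qq.
exact: prefixW (prefix_take _ _).
Qed.

Local Open Scope ring_scope.

Lemma P0false (X : finType) (q : seq X) : dP (starroot q (take 0 q)) = false.
Proof. by apply/decPP => [[[]]]; rewrite take0. Qed.

Lemma root_sum (R : rcfType) (X : finType) (q : seq X) (lam : R) : 0 < lam ->
  root (pq R q) lam -> \sum_(k <- Kl q) (lam ^+ k)^-1 = 1.
Proof.
move=> hl; rewrite /root /pq !hornerE horner_sum subr_eq0 => /eqP.
under eq_bigr => i _ do rewrite hornerXn.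
rewrite -(big_mkord (fun k => dP (starroot q (take k q))) (fun k => lam ^+ (size q - k))) /index_iota subn0 /= big_cons P0false -big_filter => h.
have h2 : \sum_(k <- Kl q) lam ^+ (size q - k) = lam ^+ size q * \sum_(k <- Kl q) (lam ^+ k)^-1.
  rewrite mulr_sumr; apply: eq_big_seq => k hk.
  by rewrite exprB ?unitfE ?gt_eqF //; case/mem_Kl: hk.
have hne : lam ^+ size q != 0 by rewrite expf_eq0 gt_eqF // andbF.
apply: (mulfI hne); rewrite mulr1 -h2.
by rewrite /Kl.
Qed.

Lemma Kl_ne (X : finType) (q : seq X) : q != [::] -> exists k, k \in Kl q.
Proof.
move=> hq; have hq0 : (0 < size q)%N by move: hq; rewrite lt0n size_eq0.
apply: (SS_size (u := q)) => //.
apply: (Pq_SS (leqnn _)); split.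
- by rewrite /pprefix prefix0s.
- exact: prefix_refl.
- by rewrite /pprefix prefix_prefix size_cat /= -{1}(addn0 (size q)) ltn_add2l.
Qed.

Lemma lam_ge1 (R : realFieldType) (X : finType) (q : seq X) (lam : R) :
  q != [::] -> 0 < lam -> \sum_(k <- Kl q) (lam ^+ k)^-1 = 1 -> 1 <= lam.
Proof.
move=> hq hl hs; case: (lerP 1 lam) => // hlt; exfalso.
have [k hk] := Kl_ne hq.
have hk0 := Kl_pos hk.
have h1 : 1 < (lam ^+ k)^-1.
  by rewrite invf_gt1 ?exprn_gt0 // exprn_ilt1 ?ltW // -lt0n.
have h2 : 0 <= \sum_(i <- Kl q | i != k) (lam ^+ i)^-1.
  by apply: sumr_ge0 => i _; rewrite invr_ge0 exprn_ge0 // ltW.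
have := hs; rewrite (bigD1_seq k) //=; last by rewrite /Kl filter_uniq // iota_uniq.
move=> h; have : 1 < 1 :> R by rewrite -[X in _ < X]h; apply: (lt_le_trans h1); rewrite lerDl.
by rewrite ltxx.
Qed.

Definition aw (R : realFieldType) (X : finType) (q : seq X) m : R := (size (W q m))%:R.

Lemma sum_cond_le (R : realFieldType) (I : Type) (r : seq I) (P : pred I) (G : I -> R) :
  (forall i, 0 <= G i) -> \sum_(i <- r | P i) G i <= \sum_(i <- r) G i.
Proof.
move=> hG; rewrite big_mkcond /=; apply: ler_sum => i _.
by case: ifP => // _; exact: hG.
Qed.

Lemma aw0 (R : realFieldType) (X : finType) (q : seq X) : aw R q 0 = 1.
Proof. by rewrite /aw W_eq. Qed.

Lemma aw_rec (R : realFieldType) (X : finType) (q : seq X) m : (0 < m)%N ->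
  aw R q m = \sum_(k <- Kl q | (k <= m)%N) aw R q (m - k).
Proof. by move=> hm; rewrite /aw size_W // natr_sum. Qed.

Lemma aw_ge0 (R : realFieldType) (X : finType) (q : seq X) m : 0 <= aw R q m.
Proof. exact: ler0n. Qed.

Lemma aw_le (R : realFieldType) (X : finType) (q : seq X) (lam : R) :
  0 < lam -> \sum_(k <- Kl q) (lam ^+ k)^-1 = 1 ->
  forall m, aw R q m <= lam ^+ m.
Proof.
move=> hl hs; elim/ltn_ind => m IH.
case: (posnP m) => [->|hm]; first by rewrite aw0 expr0.
rewrite aw_rec // (@le_trans _ _ (\sum_(k <- Kl q | (k <= m)%N) lam ^+ m * (lam ^+ k)^-1)) //.
  rewrite big_seq_cond [X in _ <= X]big_seq_cond; apply: ler_sum => k /andP[hk hkm].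
  rewrite -exprB ?unitfE ?gt_eqF //; apply: IH.
  have := Kl_pos hk; nlia.
apply: (le_trans (sum_cond_le _ _ _)).
  by move=> k; rewrite mulr_ge0 ?invr_ge0 ?exprn_ge0 // ltW.
by rewrite -[X in _ <= X]mulr1 -hs mulr_sumr.
Qed.

Definition ee (R : realFieldType) (X : finType) (q : seq X) (lam : R) i : R :=
  if (size q <= i)%N then aw R q (i - size q) / lam ^+ (i - size q) else 0.

Definition gg (R : realFieldType) (X : finType) (q : seq X) (lam : R) i k : R :=
  \sum_(j < k) ee q lam (i - j).

Lemma ee_ge0 (R : realFieldType) (X : finType) (q : seq X) (lam : R) i :
  0 < lam -> 0 <= ee q lam i.
Proof.
move=> hl; rewrite /ee; case: ifP => // _.
by rewrite divr_ge0 ?aw_ge0 ?exprn_ge0 // ltW.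
Qed.

Lemma ee_rec (R : realFieldType) (X : finType) (q : seq X) (lam : R) i :
  0 < lam -> (size q < i)%N ->
  ee q lam i = \sum_(k <- Kl q) (lam ^+ k)^-1 * ee q lam (i - k).
Proof.
move=> hl hi; rewrite {1}/ee ltnW // aw_rec; last by nlia.
rewrite mulr_suml big_mkcond /=; apply: eq_big_seq => k hk.
have hk0 := Kl_pos hk; have [_ kq _] := mem_Kl hk.
rewrite /ee.
have -> : (size q <= i - k)%N = (k <= i - size q)%N.
  by apply/idP/idP => h; nlia.
case: ifP => h; last by rewrite mulr0.
have -> : (i - k - size q = i - size q - k)%N by nlia.
rewrite mulrCA -invfM -exprD subnKC //.
Qed.

Lemma gg_step (R : realFieldType) (X : finType) (q : seq X) (lam : R) i k :
  (k <= i.+1)%N -> gg q lam i.+1 k = ee q lam i.+1 + gg q lam i k - ee q lam (i.+1 - k).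
Proof.
elim: k => [|k IH] hk.
  by rewrite /gg !big_ord0 subn0 addr0 subrr.
rewrite /gg !big_ord_recr /= -!/(gg _ _ _ _) IH; last by nlia.
by rewrite subSS addrA subrK addrK.
Qed.

Lemma Phi (R : realFieldType) (X : finType) (q : seq X) (lam : R) t :
  q != [::] -> 0 < lam -> \sum_(k <- Kl q) (lam ^+ k)^-1 = 1 ->
  \sum_(k <- Kl q) (lam ^+ k)^-1 * gg q lam (size q + t) k = 1.
Proof.
move=> hq hl hs; have hq0 : (0 < size q)%N by move: hq; rewrite lt0n size_eq0.
elim: t => [|t IH].
  rewrite -[RHS]hs; apply: eq_big_seq => k hk.
  have hk0 := Kl_pos hk.
  rewrite addn0 /gg; case: k hk hk0 => // k _ _.
  rewrite big_ord_recl /= subn0 /ee leqnn subnn aw0 expr0 divr1.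
  rewrite big1 ?addr0 ?mulr1 // => j _.
  rewrite /bump /=; case: ifP => // h; exfalso; nlia.
rewrite addnS.
rewrite (eq_big_seq (fun k => (lam ^+ k)^-1 * ee q lam (size q + t).+1 +
    (lam ^+ k)^-1 * gg q lam (size q + t) k -
    (lam ^+ k)^-1 * ee q lam ((size q + t).+1 - k))); last first.
  move=> k hk; have [_ kq _] := mem_Kl hk.
  by rewrite gg_step ?mulrBr ?mulrDr //; nlia.
rewrite sumrB big_split /= -mulr_suml hs mul1r IH -ee_rec //; last by nlia.
by rewrite addrAC subrr add0r.
Qed.

Lemma gg_mono (R : realFieldType) (X : finType) (q : seq X) (lam : R) i k k' :
  0 < lam -> (k <= k')%N -> gg q lam i k <= gg q lam i k'.
Proof.
move=> hl; elim: k' => [|k' IH] hk.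
  by move: hk; rewrite leqn0 => /eqP ->.
case: (ltngtP k k'.+1) => h.
- rewrite /gg big_ord_recr /= -/(gg _ _ _ _); apply: le_trans (IH h) _.
  by rewrite lerDl ee_ge0.
- by exfalso; nlia.
- by rewrite h.
Qed.

Lemma gg_ge1 (R : realFieldType) (X : finType) (q : seq X) (lam : R) i :
  q != [::] -> 0 < lam -> \sum_(k <- Kl q) (lam ^+ k)^-1 = 1 ->
  (size q <= i)%N -> 1 <= gg q lam i (size q).
Proof.
move=> hq hl hs hi.
have -> : i = (size q + (i - size q))%N by nlia.
rewrite -{1}(Phi (i - size q)%N hq hl hs).
rewrite -[X in _ <= X]mulr1 -hs mulr_sumr big_seq [X in _ <= X]big_seq.
apply: ler_sum => k hk; rewrite [X in _ <= X]mulrC; apply: ler_wpM2l.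
  by rewrite invr_ge0 exprn_ge0 // ltW.
by apply: gg_mono => //; case/mem_Kl: hk.
Qed.

Lemma count_lower (R : realFieldType) (X : finType) (q : seq X) (lam : R) n :
  q != [::] -> 0 < lam -> 1 <= lam -> \sum_(k <- Kl q) (lam ^+ k)^-1 = 1 ->
  lam ^+ n <= (infix_count q n)%:R * (lam ^+ size q * (size q)%:R).
Proof.
move=> hq hl hge hs.
set c : R := (infix_count q n)%:R.
have h1 := gg_ge1 hq hl hs (leq_addl n (size q)).
have hb : 0 <= c * (lam ^+ size q / lam ^+ n).
  by rewrite mulr_ge0 ?ler0n // divr_ge0 // exprn_ge0 // ltW.
have h2 : gg q lam (n + size q) (size q) <= (c * (lam ^+ size q / lam ^+ n)) *+ size q.
  apply: le_trans (_ : \sum_(j < size q) (c * (lam ^+ size q / lam ^+ n)) <= _);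
    last by rewrite sumr_const card_ord.
  rewrite /gg; apply: ler_sum => j _.
  rewrite /ee; case: ifP => hj //.
  have hjL := ltn_ord j.
  set m := (n + size q - j - size q)%N.
  have hm : m = (n - j)%N by rewrite /m; nlia.
  have ha : aw R q m <= c.
    by rewrite /aw /c ler_nat; apply: count_ge; rewrite hm; nlia.
  have hp : (lam ^+ m)^-1 <= lam ^+ size q / lam ^+ n.
    rewrite ler_pdivlMr ?exprn_gt0 //.
    have -> : n = (j + m)%N by rewrite hm; nlia.
    rewrite exprD mulrC mulfK ?expf_neq0 ?gt_eqF //.
    by apply: ler_weXn2l => //; nlia.
  apply: ler_pM => //; rewrite ?invr_ge0 ?exprn_ge0 // ?ltW // ?ler0n.
have h := le_trans h1 h2.
rewrite -mulr_natr in h.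
rewrite -[lam ^+ n]mul1r.
apply: le_trans (ler_wpM2r (exprn_ge0 n (ltW hl)) h) _.
rewrite mulrAC -(mulrA c) divfK; last by rewrite expf_neq0 // gt_eqF.
by rewrite -mulrA.
Qed.

Lemma size_flat (T S : Type) (B : S -> seq T) (s : seq S) :
  size (flatten (map B s)) = \sum_(x <- s) size (B x).
Proof. by rewrite size_flatten /shape -map_comp sumnE big_map. Qed.

Lemma count_upper (R : realFieldType) (X : finType) (q : seq X) (lam : R) n :
  q != [::] -> 0 < lam -> 1 <= lam -> \sum_(k <- Kl q) (lam ^+ k)^-1 = 1 ->
  (infix_count q n)%:R <= lam ^+ n * ((2 * size q).+1 * (size q).+1 * (size q).+1)%N%:R.
Proof.
move=> hq hl hge hs.
have hc : (infix_count q n <= size (Cl q n))%N.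
  by apply: card_le => w hw hi; apply: mem_Cl.
apply: le_trans (_ : (size (Cl q n))%:R <= _); first by rewrite ler_nat.
have hin : forall d k, ((size (flatten [seq [seq take n (drop d (take k q) ++ u ++ q)
    | u <- W q l] | l <- index_iota (n - 2 * size q) n.+1]))%:R : R)
    <= lam ^+ n *+ (2 * size q).+1.
  move=> d k; rewrite size_flat natr_sum.
  apply: le_trans (_ : \sum_(l <- index_iota (n - 2 * size q) n.+1) lam ^+ n <= _).
    rewrite big_seq [X in _ <= X]big_seq; apply: ler_sum => l.
    rewrite mem_index_iota => /andP[_ hln].
    rewrite size_map; apply: le_trans (aw_le hl hs l) _.
    by apply: ler_weXn2l => //; nlia.
  rewrite sumr_const_nat; apply: ler_wpMn2l; first by rewrite exprn_ge0 // ltW.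
  nlia.
have hmid : forall d, ((size (flatten [seq flatten [seq [seq take n (drop d (take k q) ++ u ++ q)
    | u <- W q l] | l <- index_iota (n - 2 * size q) n.+1] | k <- index_iota 0 (size q).+1]))%:R : R)
    <= lam ^+ n *+ (2 * size q).+1 *+ (size q).+1.
  move=> d; rewrite size_flat natr_sum.
  apply: le_trans (_ : \sum_(0 <= k < (size q).+1) lam ^+ n *+ (2 * size q).+1 <= _).
    by apply: ler_sum => k _; exact: hin.
  by rewrite sumr_const_nat subn0.
rewrite /Cl size_flat natr_sum.
apply: le_trans (_ : \sum_(0 <= d < (size q).+1) lam ^+ n *+ (2 * size q).+1 *+ (size q).+1 <= _).
  by apply: ler_sum => d _; exact: hmid.
by rewrite sumr_const_nat subn0 -!mulrnA mulr_natr mulnA.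
Qed.

Unset Implicit Arguments.

Theorem lemma3 (X : finType) (hX : (1 < #|X|)%N) (q : seq X) (hq : q != [::])
    (R : rcfType) (lam : R) (hlam : largest_pos_root (pq R q) lam) :
  exists c1 c2 : R, [/\ 0 < c1, 0 < c2 &
    forall n : nat, c1 * lam ^+ n <= (infix_count q n)%:R <= c2 * lam ^+ n].
Proof.
case: hlam => hl hr _.
have hs := root_sum hl hr.
have hge := lam_ge1 hq hl hs.
have hq0 : (0 < size q)%N by move: hq; rewrite lt0n size_eq0.
exists ((lam ^+ size q * (size q)%:R)^-1),
  ((2 * size q).+1 * (size q).+1 * (size q).+1)%N%:R.
split.
- by rewrite invr_gt0 mulr_gt0 ?exprn_gt0 // ltr0n.
- by rewrite ltr0n.
move=> n; apply/andP; split.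
  rewrite ler_pdivrMl; last by rewrite mulr_gt0 ?exprn_gt0 // ltr0n.
  by rewrite mulrC; exact: count_lower.
by rewrite mulrC; exact: count_upper.
Qed.
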